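(* Let $P$ be an Eulerian poset of rank $d$ and $P^*$ its dual Eulerian poset. Then $$B(P;u,v)=(-u)^dB(P^*;u^{-1},v).$$
   Context: An Eulerian poset is a finite poset $P$ with least element $\hat0$, greatest element $\hat1$, all maximal chains of the same length $d$ (the rank), rank function $\rho(x)$ = length of any saturated chain from $\hat0$ to $x$, such that the Möbius function satisfies $\mu_P(x,y)=(-1)^{\rho(y)-\rho(x)}$ for $x\le y$. Intervals $[x,y]=\{z:x\le z\le y\}$ are Eulerian of rank $\rho(y)-\rho(x)$; the dual poset $P^*$ (reversed order) is Eulerian of rank $d$ with rank function $d-\rho$. Define $G(P,t),H(P,t)\in\mathbb{Z}[t]$ recursively: $G=H=1$ if $d=0$; for $d>0$, $H(P,t)=\sum_{\hat0<x\le\hat1}(t-1)^{\rho(x)-1}G([x,\hat1],t)$ and $G(P,t)=\tau_{<d/2}((1-t)H(P,t))$, where $\tau_{<r}(\sum a_it^i)=\sum_{i<r}a_it^i$. Define $B(P;u,v)\in\mathbb{Z}[u,v]$ recursively: $B(P;u,v)=1$ if $d=0$, and for $d>0$ by $\sum_{\hat0\le x\le\hat1}B([\hat0,x];u,v)u^{d-\rho(x)}G([x,\hat1],u^{-1}v)=G(P,uv)$ (the term $x=\hat1$ being $B(P;u,v)$). *)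

(* Defs.v *)
From HB Require Import structures.
From mathcomp Require Import all_boot all_order all_algebra.
Set Implicit Arguments. Unset Strict Implicit. Unset Printing Implicit Defensive.
Import Order.TTheory GRing.Theory Num.Theory.
Local Open Scope ring_scope.

(* A finite bounded poset is a [finTBPOrderType]; \bot = 0^, \top = 1^.
   Its dual is [T^d] (Order.dual). *)

Section EulerianDefs.
Variables (disp : Order.disp_t) (T : finTBPOrderType disp).

Definition covers (x y : T) : bool :=
  (x < y)%O && [forall z, ~~ ((x < z)%O && (z < y)%O)].

(* saturated chain x = z0 <c z1 <c ... <c zk = y, given as s = [:: z1; ...; zk];
   its length is k = size s *)
Definition satchain (x y : T) (s : seq T) : bool :=
  path covers x s && (last x s == y).

(* Moebius function, by the usual recursion (fuel #|T| suffices) *)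
Fixpoint muf (n : nat) (x y : T) : int :=
  match n with
  | 0 => 0
  | n'.+1 => if x == y then 1
             else if (x <= y)%O then
               - \sum_(z | (x <= z)%O && (z < y)%O) muf n' x z
             else 0
  end.
Definition mobius (x y : T) : int := muf #|T| x y.

Definition eulerian (rho : T -> nat) (d : nat) : Prop :=
  [/\ forall s, satchain Order.bottom Order.top s -> size s = d,
      forall x s, satchain Order.bottom x s -> size s = rho x
    & forall x y, (x <= y)%O -> mobius x y = (-1) ^+ (rho y - rho x)].

Variable rho : T -> nat.

Definition rk (x y : T) : nat := (rho y - rho x)%N.

(* tau_{< r/2} : keep the monomials t^i with i < r/2, i.e. i < uphalf r *)
Definition trunc_half (r : nat) (p : {poly int}) : {poly int} :=
  take_poly (uphalf r) p.

(* G([x,y], t), by recursion on the interval (fuel #|T| suffices) *)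
Fixpoint Gf (n : nat) (x y : T) : {poly int} :=
  match n with
  | 0 => 1
  | n'.+1 => if x == y then 1
             else trunc_half (rk x y)
               ((1 - 'X) * \sum_(z | (x < z)%O && (z <= y)%O)
                              ('X - 1) ^+ (rk x z).-1 * Gf n' z y)
  end.
Definition Gpoly (x y : T) : {poly int} := Gf #|T| x y.

Definition Hpoly (x y : T) : {poly int} :=
  \sum_(z | (x < z)%O && (z <= y)%O) ('X - 1) ^+ (rk x z).-1 * Gpoly z y.

Definition evalZ (K : fieldType) (p : {poly int}) (t : K) : K :=
  (map_poly (fun c : int => c%:~R) p).[t].

(* B([x,y]; u, v) evaluated at u, v in a field K (u <> 0), defined by
   sum_{x <= z <= y} B([x,z];u,v) u^{rk z y} G([z,y], u^{-1} v) = G([x,y], u v) *)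
Fixpoint Bf (K : fieldType) (n : nat) (u v : K) (x y : T) : K :=
  match n with
  | 0 => 1
  | n'.+1 => if x == y then 1
             else evalZ (Gpoly x y) (u * v)
                  - \sum_(z | (x <= z)%O && (z < y)%O)
                      Bf n' u v x z * u ^+ (rk z y) * evalZ (Gpoly z y) (u^-1 * v)
  end.
Definition Bval (K : fieldType) (u v : K) (x y : T) : K := Bf #|T| u v x y.

Definition Bposet (K : fieldType) (u v : K) : K := Bval u v Order.bottom Order.top.

End EulerianDefs.

(* Main.v *)
Require Import Defs.
From HB Require Import structures.
From mathcomp Require Import all_boot all_order all_algebra.
From mathcomp Require Import zify ring.
Import Order.TTheory GRing.Theory Num.Theory.
Local Open Scope ring_scope.

Module Aux.
Set Implicit Arguments. Unset Strict Implicit. Unset Printing Implicit Defensive.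


Section Conv.
Variables (disp : Order.disp_t) (T : finTBPOrderType disp).

Definition mU (x y : T) := #|[set w : T | (x < w)%O && (w <= y)%O]|.
Definition mL (x y : T) := #|[set w : T | (x <= w)%O && (w < y)%O]|.

Lemma mU_lt x z y : (x < z)%O -> (z <= y)%O -> (mU z y < mU x y)%N.
Proof.
move=> xz zy; apply: proper_card; apply/properP; split.
  apply/subsetP => w; rewrite !inE => /andP[zw wy]; rewrite wy andbT.
  exact: lt_trans xz zw.
by exists z; rewrite !inE ?xz ?zy ?ltxx.
Qed.

Lemma mL_lt x z y : (x <= z)%O -> (z < y)%O -> (mL x z < mL x y)%N.
Proof.
move=> xz zy; apply: proper_card; apply/properP; split.
  apply/subsetP => w; rewrite !inE => /andP[xw wz]; rewrite xw /=.
  exact: lt_trans wz zy.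
by exists z; rewrite !inE ?xz ?zy ?ltxx.
Qed.

Lemma mU_card x y : (mU x y < #|T|)%N.
Proof.
rewrite -cardsT; apply: proper_card; apply/properP; split; first exact: subsetT.
by exists x; rewrite !inE ?ltxx.
Qed.

Lemma mL_card x y : (mL x y < #|T|)%N.
Proof.
rewrite -cardsT; apply: proper_card; apply/properP; split; first exact: subsetT.
by exists y; rewrite !inE ?ltxx ?andbF.
Qed.

Lemma intervalU_ind (P : T -> T -> Prop) :
  (forall x y, (forall z, (x < z)%O -> (z <= y)%O -> P z y) -> P x y) ->
  forall x y, P x y.
Proof.
move=> H x y.
suff: forall n x, (mU x y < n)%N -> P x y by apply; exact: mU_card.
elim=> [//|n IH] x' Hx; apply: H => z xz zy; apply: IH.
by have := mU_lt xz zy; lia.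
Qed.

Lemma intervalL_ind (P : T -> T -> Prop) :
  (forall x y, (forall z, (x <= z)%O -> (z < y)%O -> P x z) -> P x y) ->
  forall x y, P x y.
Proof.
move=> H x y.
suff: forall n y, (mL x y < n)%N -> P x y by apply; exact: mL_card.
elim=> [//|n IH] y' Hy; apply: H => z xz zy; apply: IH.
by have := mL_lt xz zy; lia.
Qed.

Variable R : comPzRingType.

Definition conv (f g : T -> T -> R) (x y : T) : R :=
  \sum_(z | (x <= z)%O && (z <= y)%O) f x z * g z y.

Definition dl (x y : T) : R := (x == y)%:R.

Lemma conv_assoc f g h x y : conv (conv f g) h x y = conv f (conv g h) x y.
Proof.
rewrite /conv.
under eq_bigr do rewrite big_distrl /=.
under [RHS]eq_bigr do rewrite big_distrr /=.
rewrite (exchange_big_dep (fun w => (x <= w)%O && (w <= y)%O)) /=; last first.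
  by move=> z w /andP[_ zy] /andP[xw wz]; rewrite xw (le_trans wz zy).
apply: eq_bigr => w /andP[xw wy]; apply: eq_big => [z|z _]; last by rewrite mulrA.
apply/idP/idP => [/andP[/andP[_ ->] /andP[_ ->]] //|/andP[wz zy]].
by rewrite (le_trans xw wz) zy xw wz.
Qed.

Definition eqle (f g : T -> T -> R) := forall x y, (x <= y)%O -> f x y = g x y.

Lemma conv_eq f f' g g' : eqle f f' -> eqle g g' -> forall x y, conv f g x y = conv f' g' x y.
Proof.
move=> Hf Hg x y; apply: eq_bigr => z /andP[xz zy].
by rewrite Hf // Hg.
Qed.

Lemma conv_dl_l f x y : (x <= y)%O -> conv dl f x y = f x y.
Proof.
move=> xy; rewrite /conv (bigD1 x) /=; last by rewrite lexx xy.
rewrite big1 ?addr0; first by rewrite /dl eqxx mul1r.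
by move=> z /andP[_ zx]; rewrite /dl eq_sym (negbTE zx) mul0r.
Qed.

Lemma conv_dl_r f x y : (x <= y)%O -> conv f dl x y = f x y.
Proof.
move=> xy; rewrite /conv (bigD1 y) /=; last by rewrite lexx xy.
rewrite big1 ?addr0; first by rewrite /dl eqxx mulr1.
by move=> z /andP[_ zx]; rewrite /dl (negbTE zx) mulr0.
Qed.

Lemma conv_splitl f g x y : (x <= y)%O ->
  conv f g x y = f x x * g x y + \sum_(z | (x < z)%O && (z <= y)%O) f x z * g z y.
Proof.
move=> xy; rewrite /conv (bigD1 x) /=; last by rewrite lexx xy.
congr (_ + _); apply: eq_bigl => z.
by rewrite lt_def; case: (z == x); case: (x <= z)%O; case: (z <= y)%O.
Qed.

Lemma conv_splitr f g x y : (x <= y)%O ->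
  conv f g x y = f x y * g y y + \sum_(z | (x <= z)%O && (z < y)%O) f x z * g z y.
Proof.
move=> xy; rewrite /conv (bigD1 y) /=; last by rewrite lexx xy.
congr (_ + _); apply: eq_bigl => z.
by rewrite (lt_def z y) [y == z]eq_sym; case: (z == y); case: (x <= z)%O; case: (z <= y)%O.
Qed.

Lemma conv_cancel_l P X Y : (forall x, P x x = 1) ->
  eqle (conv P X) (conv P Y) -> eqle X Y.
Proof.
move=> P1 H; apply: intervalU_ind => x y IH xy.
have := H x y xy; rewrite !conv_splitl // P1 !mul1r.
rewrite (eq_bigr (fun z => P x z * Y z y)); first by move/addIr.
by move=> z /andP[xz zy]; rewrite IH.
Qed.

Lemma conv_cancel_r P X Y : (forall x, P x x = 1) ->
  eqle (conv X P) (conv Y P) -> eqle X Y.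
Proof.
move=> P1 H; apply: intervalL_ind => x y IH xy.
have := H x y xy; rewrite !conv_splitr // P1 !mulr1.
rewrite (eq_bigr (fun z => Y x z * P z y)); first by move/addIr.
by move=> z /andP[xz zy]; rewrite IH // ltW.
Qed.

End Conv.



Definition barp (r : nat) (p : {poly int}) : {poly int} := \poly_(i < r.+1) p`_(r - i).

Lemma coef_barp r p i : (barp r p)`_i = if (i <= r)%N then p`_(r - i) else 0.
Proof. by rewrite coef_poly ltnS. Qed.

Lemma barpD r p q : barp r (p + q) = barp r p + barp r q.
Proof. by apply/polyP => i; rewrite coefD !coef_barp coefD; case: ifP; rewrite ?addr0. Qed.

Lemma barp0 r : barp r 0 = 0.
Proof. by apply/polyP => i; rewrite coef_barp !coef0; case: ifP. Qed.

Lemma barpN r p : barp r (- p) = - barp r p.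
Proof. by apply/polyP => i; rewrite coefN !coef_barp coefN; case: ifP; rewrite ?oppr0. Qed.

Lemma barpZ r c p : barp r (c *: p) = c *: barp r p.
Proof. by apply/polyP => i; rewrite coefZ !coef_barp coefZ; case: ifP; rewrite ?mulr0. Qed.

Lemma barp_sum r I (s : seq I) (P : pred I) (F : I -> {poly int}) :
  barp r (\sum_(i <- s | P i) F i) = \sum_(i <- s | P i) barp r (F i).
Proof. exact: (big_morph (barp r) (barpD r) (barp0 r)). Qed.

Lemma barpXn r k : (k <= r)%N -> barp r 'X^k = 'X^(r - k).
Proof.
move=> kr; apply/polyP => i; rewrite coef_barp !coefXn.
case: (leqP i r) => ir.
  by congr (_ %:R); congr (nat_of_bool _); apply/idP/idP => /eqP h; apply/eqP; lia.
by rewrite (_ : (i == (r - k)%N) = false) //; apply/negbTE/eqP; lia.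
Qed.

Lemma barp_sign r k p : barp r ((-1) ^+ k * p) = (-1) ^+ k * barp r p.
Proof. by rewrite -signr_odd !mulr_sign; case: (odd k); rewrite ?barpN. Qed.

Lemma poly_exp n (p : {poly int}) : (size p <= n)%N -> p = \sum_(i < n) p`_i *: 'X^i.
Proof.
move=> hp; rewrite -poly_def; apply/polyP => i; rewrite coef_poly.
by case: ltnP => // h; rewrite nth_default // (leq_trans hp h).
Qed.

Lemma barp_exp a (p : {poly int}) : (size p <= a.+1)%N -> barp a p = \sum_(i < a.+1) p`_i *: 'X^(a - i).
Proof.
move=> hp; rewrite {1}(poly_exp hp) barp_sum; apply: eq_bigr => i _.
by rewrite barpZ barpXn // -ltnS.
Qed.

Lemma barp_mul a b (p q : {poly int}) : (size p <= a.+1)%N -> (size q <= b.+1)%N ->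
  barp (a + b) (p * q) = barp a p * barp b q.
Proof.
move=> hp hq.
rewrite {1}(poly_exp hp) {1}(poly_exp hq) (barp_exp hp) (barp_exp hq).
rewrite big_distrl barp_sum big_distrl /=; apply: eq_bigr => i _.
rewrite big_distrr barp_sum big_distrr /=; apply: eq_bigr => j _.
rewrite -!scalerAl -!scalerAr !scalerA -!exprD barpZ barpXn; last first.
  by have := ltn_ord i; have := ltn_ord j; lia.
have hi := ltn_ord i; have hj := ltn_ord j.
have -> : (a + b - (i + j) = a - i + (b - j))%N by lia.
by [].
Qed.

Lemma barpC0 c : barp 0 c%:P = c%:P.
Proof. by apply/polyP => -[|i]; rewrite coef_barp !coefC. Qed.

Lemma barpK k : barp k (('X - 1) ^+ k) = (1 - 'X) ^+ k.
Proof.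
elim: k => [|k IH]; first by rewrite !expr0 -polyC1 barpC0.
have -> : k.+1 = (1 + k)%N by [].
rewrite exprD expr1 barp_mul ?size_exp_XsubC -?polyC1 ?size_XsubC //.
rewrite polyC1 IH exprS; congr (_ * _).
apply/polyP => i; rewrite coef_barp coefB coefX coef1 coefB coefX coef1.
by case: i => [|[|i]].
Qed.



Section Rank.
Variables (disp : Order.disp_t) (T : finTBPOrderType disp) (rho : T -> nat).
Hypothesis Hmono : forall x y : T, (x <= y)%O -> (rho x <= rho y)%N.
Hypothesis Hsmono : forall x y : T, (x < y)%O -> (rho x < rho y)%N.
Hypothesis Heuler : forall x y : T, (x < y)%O ->
  \sum_(z | (x <= z)%O && (z <= y)%O) (-1) ^+ (rho z - rho x)%N = 0 :> int.

Local Notation rk := (rk rho).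

Lemma rk_add x z y : (x <= z)%O -> (z <= y)%O -> rk x y = (rk x z + rk z y)%N.
Proof. move=> xz zy; have := Hmono xz; have := Hmono zy; rewrite /Defs.rk; lia. Qed.

Lemma rkxx x : rk x x = 0%N.
Proof. by rewrite /Defs.rk subnn. Qed.

Lemma rk_pos x y : (x < y)%O -> (0 < rk x y)%N.
Proof. move=> xy; have := Hsmono xy; rewrite /Defs.rk; lia. Qed.

Definition tw (R : comPzRingType) (c : R) (f : T -> T -> R) x y := c ^+ (rk x y) * f x y.

Lemma tw_conv (R : comPzRingType) (c : R) f g :
  eqle (tw c (conv f g)) (conv (tw c f) (tw c g)).
Proof.
move=> x y xy; rewrite /tw /conv mulr_sumr; apply: eq_bigr => z /andP[xz zy].
rewrite (rk_add xz zy) exprD; ring.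
Qed.

Definition Kp (x y : T) : {poly int} := ('X - 1) ^+ (rk x y).
Definition Kbp (x y : T) : {poly int} := (1 - 'X) ^+ (rk x y).
Definition barf (f : T -> T -> {poly int}) x y := barp (rk x y) (f x y).

Lemma conv_Kb_K : eqle (conv Kbp Kp) (@dl _ T _).
Proof.
move=> x y xy; rewrite /conv.
rewrite (eq_bigr (fun z => ((-1) ^+ (rho z - rho x) : int)%:P * ('X - 1) ^+ (rk x y))); last first.
  move=> z /andP[xz zy]; rewrite /Kbp /Kp (rk_add xz zy) exprD mulrA; congr (_ * _).
  by rewrite -opprB (exprNn ('X - 1)) rmorphXn rmorphN1.
rewrite -mulr_suml -rmorph_sum /=.
case: (eqVneq x y) => [<-|nxy].
  rewrite (big_pred1 x) /dl ?eqxx; last by move=> z; rewrite /= -eq_le eq_sym.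
  by rewrite subnn rkxx !expr0 mulr1.
have xy' : (x < y)%O by rewrite lt_def eq_sym nxy xy.
by rewrite Heuler // mul0r /dl (negbTE nxy).
Qed.

Lemma barf_K x y : barf Kp x y = Kbp x y.
Proof. exact: barpK. Qed.

Lemma tw_sign_K x y : tw (-1) Kp x y = Kbp x y.
Proof. by rewrite /tw /Kp /Kbp -exprMn mulN1r opprB. Qed.

Lemma barf_tw_sign f x y : barf (tw (-1) f) x y = tw (-1) (barf f) x y.
Proof. exact: barp_sign. Qed.

Definition szb (f : T -> T -> {poly int}) := forall x y, (x <= y)%O -> (size (f x y) <= (rk x y).+1)%N.

Lemma szb_K : szb Kp.
Proof. by move=> x y _; rewrite /Kp -polyC1 size_exp_XsubC. Qed.

Lemma szb_tw f : szb f -> szb (tw (-1) f).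
Proof.
move=> H x y xy; rewrite /tw -signr_odd mulr_sign.
by case: (odd _); rewrite ?size_opp H.
Qed.

Lemma size_sum_le (I : Type) (s : seq I) (P : pred I) (F : I -> {poly int}) n :
  (forall i, P i -> (size (F i) <= n)%N) -> (size (\sum_(i <- s | P i) F i)%R <= n)%N.
Proof.
move=> H; apply: (big_ind (fun p : {poly int} => (size p <= n)%N)) => //.
  by rewrite size_poly0.
by move=> p q hp hq; apply: leq_trans (size_add _ _) _; rewrite geq_max hp hq.
Qed.

Lemma barf_conv f g : szb f -> szb g ->
  eqle (barf (conv f g)) (conv (barf f) (barf g)).
Proof.
move=> Hf Hg x y xy; rewrite /barf /conv barp_sum; apply: eq_bigr => z /andP[xz zy].
by rewrite (rk_add xz zy) barp_mul ?Hf ?Hg.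
Qed.

End Rank.



Section Gfuel.
Variables (disp : Order.disp_t) (T : finTBPOrderType disp) (rho : T -> nat).

Lemma Gf_fuel n (x y : T) : (mU x y < n)%N -> Gf rho n x y = Gf rho n.+1 x y.
Proof.
elim: n x y => [//|n IH] x y h /=.
case: eqP => // _; congr (trunc_half _ (_ * _)).
apply: eq_bigr => z /andP[xz zy]; rewrite IH //.
by have := mU_lt xz zy; lia.
Qed.

Lemma cardT_S : #|T| = (#|T|.-1).+1.
Proof. by rewrite prednK //; have := mU_card (Order.bottom : T) Order.bottom; lia. Qed.

Lemma Gpoly_xx x : Gpoly rho x x = 1.
Proof. by rewrite /Gpoly cardT_S /= eqxx. Qed.

Lemma Gpoly_rec x y : x != y -> Gpoly rho x y = trunc_half (rk rho x y)
   ((1 - 'X) * \sum_(z | (x < z)%O && (z <= y)%O) ('X - 1) ^+ (rk rho x z).-1 * Gpoly rho z y).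
Proof.
move=> nxy; rewrite /Gpoly cardT_S /= (negbTE nxy); congr (trunc_half _ (_ * _)).
apply: eq_bigr => z /andP[xz zy]; congr (_ * _); apply: Gf_fuel.
rewrite -ltnS -cardT_S; have := mU_lt xz zy; have := mU_card x y; lia.
Qed.

Lemma Gpoly_size_lt x y : x != y -> (size (Gpoly rho x y) <= uphalf (rk rho x y))%N.
Proof. by move=> nxy; rewrite Gpoly_rec //; apply: size_take_poly. Qed.

End Gfuel.

Section KLS.
Variables (disp : Order.disp_t) (T : finTBPOrderType disp) (rho : T -> nat).
Hypothesis Hmono : forall x y : T, (x <= y)%O -> (rho x <= rho y)%N.
Hypothesis Hsmono : forall x y : T, (x < y)%O -> (rho x < rho y)%N.
Hypothesis Heuler : forall x y : T, (x < y)%O ->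
  \sum_(z | (x <= z)%O && (z <= y)%O) (-1) ^+ (rho z - rho x)%N = 0 :> int.

Local Notation rk := (rk rho).
Local Notation Gp := (Gpoly rho).

Lemma szb_G : szb rho Gp.
Proof.
move=> x y xy; case: (eqVneq x y) => [<-|nxy].
  by rewrite Gpoly_xx size_poly1.
apply: leq_trans (Gpoly_size_lt _ nxy) _; rewrite uphalfE; lia.
Qed.

Lemma KLS : eqle (conv (Kp rho) Gp) (barf rho Gp).
Proof.
apply: intervalU_ind => x y IH xy.
case: (eqVneq x y) => [<-|nxy].
  rewrite conv_splitl // big1 ?addr0; last first.
    by move=> z /andP[xz zx]; have := lt_le_trans xz zx; rewrite ltxx.
  by rewrite /Kp /barf rkxx expr0 mul1r Gpoly_xx -polyC1 barpC0.
have xy' : (x < y)%O by rewrite lt_def eq_sym nxy xy.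
set A := \sum_(z | (x < z)%O && (z <= y)%O) Kp rho x z * Gp z y.
have HF : conv (Kp rho) Gp x y = Gp x y + A by rewrite conv_splitl // /Kp rkxx expr0 mul1r.
have H1 : conv (Kbp rho) (conv (Kp rho) Gp) x y = Gp x y.
  rewrite -conv_assoc (@conv_eq _ _ _ _ (@dl _ T _) _ Gp) ?conv_dl_l //.
  exact: conv_Kb_K.
have H2 : conv (Kbp rho) (conv (Kp rho) Gp) x y = conv (Kp rho) Gp x y + barp (rk x y) A.
  rewrite conv_splitl // /Kbp rkxx expr0 mul1r; congr (_ + _).
  rewrite /A barp_sum; apply: eq_bigr => z /andP[xz zy].
  rewrite IH // (rk_add Hmono (ltW xz) zy) barp_mul ?barpK //.
    by apply: szb_K; apply: ltW.
  by apply: szb_G.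
have HA : barp (rk x y) A = - A.
  have E : Gp x y = Gp x y + A + barp (rk x y) A by rewrite -HF -H2 H1.
  by apply: (addrI (Gp x y + A)); rewrite -E addrK.
have HG : Gp x y = take_poly (uphalf (rk x y)) (- A).
  rewrite Gpoly_rec //; congr (take_poly _ _).
  rewrite mulr_sumr /A -sumrN; apply: eq_bigr => z /andP[xz zy].
  rewrite /Kp -[in RHS](prednK (rk_pos Hsmono xz)) exprS -opprB; ring.
have szA : (size A <= (rk x y).+1)%N.
  apply: size_sum_le => z /andP[xz zy]; apply: leq_trans (size_mul_leq _ _) _.
  have := @szb_K _ _ rho x z (ltW xz); have := szb_G zy; rewrite (rk_add Hmono (ltW xz) zy); lia.
have hA i : (i <= rk x y)%N -> A`_(rk x y - i) = - A`_i.
  by move=> ir; have := congr1 (fun p : {poly int} => p`_i) HA; rewrite coef_barp coefN ir.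
have hA0 i : (rk x y < i)%N -> A`_i = 0.
  by move=> ir; rewrite nth_default //; apply: leq_trans szA ir.
rewrite HF /barf HG; apply/polyP => i.
rewrite coefD coef_barp !coef_take_poly !coefN.
move: (rk x y) hA hA0 => r hA hA0.
case: (leqP i r) => ir; last first.
  by rewrite hA0 // oppr0; case: ifP => _; rewrite addr0.
rewrite hA // opprK.
case: (ltnP i (uphalf r)) => h1; case: (ltnP (r - i) (uphalf r)) => h2.
- by exfalso; move: h1 h2; rewrite uphalfE; lia.
- by rewrite addNr.
- by rewrite add0r.
- have e : (r - i)%N = i by move: h1 h2; rewrite uphalfE; lia.
  have := hA i ir; rewrite e add0r; move: (A`_i) => a h. have h3 : (a : int) = - a := h. lia.
Qed.

End KLS.



Lemma size_sign k (p : {poly int}) : size ((-1) ^+ k * p) = size p.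
Proof. by rewrite -signr_odd mulr_sign; case: (odd k); rewrite ?size_opp. Qed.

Section SLemma.
Variables (disp : Order.disp_t) (T : finTBPOrderType disp) (rho : T -> nat).
Hypothesis Hmono : forall x y : T, (x <= y)%O -> (rho x <= rho y)%N.
Hypothesis Hsmono : forall x y : T, (x < y)%O -> (rho x < rho y)%N.
Hypothesis Heuler : forall x y : T, (x < y)%O ->
  \sum_(z | (x <= z)%O && (z <= y)%O) (-1) ^+ (rho z - rho x)%N = 0 :> int.

Local Notation rk := (rk rho).
Local Notation Gp := (Gpoly rho).

Lemma S_lemma (Gs : T -> T -> {poly int}) :
  (forall x, Gs x x = 1) ->
  (forall x y, (x < y)%O -> (size (Gs x y) <= uphalf (rk x y))%N) ->
  szb rho Gs ->
  eqle (conv Gs (Kp rho)) (barf rho Gs) ->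
  eqle (conv (tw rho (-1) Gs) Gp) (@dl _ T _).
Proof.
move=> Gs1 Gslt Gssz GsK x y xy.
have HQ : barp (rk x y) (conv (tw rho (-1) Gs) Gp x y) = conv (tw rho (-1) Gs) Gp x y.
  rewrite -/(barf rho _ x y) barf_conv //; last 2 first.
  - exact: szb_tw.
  - exact: szb_G.
  transitivity (conv (tw rho (-1) (conv Gs (Kp rho))) (conv (Kp rho) Gp) x y).
    apply: conv_eq => a b ab; first by rewrite barf_tw_sign /tw GsK.
    by rewrite KLS.
  transitivity (conv (conv (tw rho (-1) Gs) (Kbp rho)) (conv (Kp rho) Gp) x y).
    apply: conv_eq => a b ab //; rewrite tw_conv //; apply: conv_eq => c e ce //.
    by rewrite tw_sign_K.
  rewrite conv_assoc; apply: conv_eq => a b ab //.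
  rewrite -conv_assoc (@conv_eq _ _ _ _ (@dl _ T _) _ Gp) ?conv_dl_l //.
  exact: conv_Kb_K.
case: (eqVneq x y) => [<-|nxy].
  rewrite conv_splitl // big1 ?addr0; last first.
    by move=> z /andP[xz zx]; have := lt_le_trans xz zx; rewrite ltxx.
  by rewrite /tw /dl rkxx expr0 mul1r Gs1 Gpoly_xx eqxx mulr1.
have xy' : (x < y)%O by rewrite lt_def eq_sym nxy xy.
have szQ : (size (conv (tw rho (-1) Gs) Gp x y) <= uphalf (rk x y))%N.
  apply: size_sum_le => z /andP[xz zy].
  case: (eqVneq z x) => [->|nzx].
    by rewrite /tw rkxx expr0 mul1r Gs1 mul1r Gpoly_size_lt.
  case: (eqVneq z y) => [->|nzy].
    by rewrite Gpoly_xx mulr1 /tw size_sign Gslt.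
  have xz' : (x < z)%O by rewrite lt_def nzx xz.
  have zy' : (z < y)%O by rewrite lt_def eq_sym nzy zy.
  apply: leq_trans (size_mul_leq _ _) _.
  rewrite /tw size_sign (rk_add Hmono xz zy).
  have := Gslt _ _ xz'; have := Gpoly_size_lt rho nzy.
  rewrite !uphalfE; lia.
rewrite /dl (negbTE nxy); apply/polyP => i; rewrite coef0.
move: HQ szQ; move: (conv _ _ x y) (rk x y) => Q r HQ szQ.
case: (ltnP i (uphalf r)) => hi; last by rewrite nth_default //; apply: leq_trans szQ hi.
have := congr1 (fun p : {poly int} => p`_i) HQ; rewrite coef_barp.
have -> : (i <= r)%N by move: hi; rewrite uphalfE; lia.
move=> <-; rewrite nth_default //; apply: leq_trans szQ _.
by move: hi; rewrite uphalfE; lia.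
Qed.

End SLemma.



Section Euler.
Variables (disp : Order.disp_t) (T : finTBPOrderType disp).

Lemma mU_ltr (x z y : T) : (z < y)%O -> (x < y)%O -> (mU x z < mU x y)%N.
Proof.
move=> zy xy; apply: proper_card; apply/properP; split.
  apply/subsetP => w; rewrite !inE => /andP[xw wz]; rewrite xw /=.
  exact: le_trans wz (ltW zy).
by exists y; rewrite !inE ?xy ?lexx //= (lt_geF zy).
Qed.

Lemma satchain_ex (x y : T) : (x <= y)%O -> exists s, satchain x y s.
Proof.
suff H : forall n (x y : T), (mU x y < n)%N -> (x <= y)%O -> exists s, satchain x y s.
  by apply: H (mU_card x y).
elim=> [//|n IH] {}x {}y hn xy.
case: (eqVneq x y) => [<-|nxy]; first by exists [::]; rewrite /satchain /= eqxx.
have xy' : (x < y)%O by rewrite lt_def eq_sym nxy xy.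
case hc: (covers x y); first by exists [:: y]; rewrite /satchain /= hc eqxx.
move: hc; rewrite /covers xy' /= => /negbT/forallPn [z]; rewrite negbK => /andP[xz zy].
have [s1 h1] : exists s, satchain x z s.
  by apply: IH (ltW xz); have := mU_ltr zy xy'; lia.
have [s2 h2] : exists s, satchain z y s.
  by apply: IH (ltW zy); have := mU_lt xz (ltW zy); lia.
exists (s1 ++ s2); move: h1 h2; rewrite /satchain cat_path last_cat.
by move=> /andP[-> /eqP->] /andP[-> ->].
Qed.

Lemma muf_fuel n (x y : T) : (mL x y < n)%N -> muf n x y = muf n.+1 x y.
Proof.
elim: n x y => [//|n IH] x y h /=.
case: eqP => // _; case: ifP => // _; congr (- _).
apply: eq_bigr => z /andP[xz zy]; rewrite IH //.
by have := mL_lt xz zy; lia.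
Qed.

Lemma mobius_rec (x y : T) : x != y -> (x <= y)%O ->
  mobius x y = - \sum_(z | (x <= z)%O && (z < y)%O) mobius x z.
Proof.
move=> nxy xy; rewrite /mobius cardT_S /= (negbTE nxy) xy; congr (- _).
apply: eq_bigr => z /andP[xz zy]; apply: muf_fuel.
by rewrite -ltnS -cardT_S; have := mL_lt xz zy; have := mL_card x y; lia.
Qed.

Variables (rho : T -> nat) (d : nat).
Hypothesis HE : eulerian rho d.

Lemma rho_chain (x y : T) s : (x <= y)%O -> satchain x y s -> rho y = (rho x + size s)%N.
Proof.
case: HE => _ Hr _ xy hs.
have [s0 h0] := satchain_ex (le0x x).
have h : satchain Order.bottom y (s0 ++ s).
  by move: h0 hs; rewrite /satchain cat_path last_cat => /andP[-> /eqP->] /andP[-> ->].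
by rewrite -(Hr _ _ h) -(Hr _ _ h0) size_cat.
Qed.

Lemma E_mono (x y : T) : (x <= y)%O -> (rho x <= rho y)%N.
Proof. move=> xy; have [s hs] := satchain_ex xy; rewrite (rho_chain xy hs); lia. Qed.

Lemma E_smono (x y : T) : (x < y)%O -> (rho x < rho y)%N.
Proof.
move=> xy; have [s hs] := satchain_ex (ltW xy); rewrite (rho_chain (ltW xy) hs).
case: s hs => [|a s] hs /=; last lia.
by move: hs; rewrite /satchain /= => /eqP e; move: xy; rewrite e ltxx.
Qed.

Lemma E_bot : rho Order.bottom = 0%N.
Proof. by case: HE => _ Hr _; rewrite -(Hr Order.bottom [::]) // /satchain /= eqxx. Qed.

Lemma E_top : rho Order.top = d.
Proof.
case: HE => Hd Hr _; have [s hs] := satchain_ex (le0x (Order.top : T)).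
by rewrite -(Hr _ _ hs) (Hd _ hs).
Qed.

Lemma E_led (x : T) : (rho x <= d)%N.
Proof. by rewrite -E_top; apply: E_mono; apply: lex1. Qed.

Lemma E_euler (x y : T) : (x < y)%O ->
  \sum_(z | (x <= z)%O && (z <= y)%O) (-1) ^+ (rho z - rho x)%N = 0 :> int.
Proof.
case: HE => _ _ Hmu xy.
rewrite (eq_bigr (fun z => mobius x z)); last by move=> z /andP[xz _]; rewrite Hmu.
rewrite (bigD1 y) /=; last by rewrite lexx ltW.
rewrite mobius_rec ?(lt_eqF xy) ?ltW //.
rewrite [X in _ + X](eq_bigl (fun z => (x <= z)%O && (z < y)%O)); first by rewrite addNr.
by move=> z; rewrite (lt_def z y) [y == z]eq_sym; case: (z == y); case: (x <= z)%O; case: (z <= y)%O.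
Qed.

End Euler.



Section EvalZ.
Variable K : fieldType.

Lemma evalZ_mul (p q : {poly int}) (t : K) : evalZ (p * q) t = evalZ p t * evalZ q t.
Proof. by rewrite /evalZ rmorphM hornerM. Qed.

Lemma evalZ_sum I (s : seq I) (P : pred I) (F : I -> {poly int}) (t : K) :
  evalZ (\sum_(i <- s | P i) F i) t = \sum_(i <- s | P i) evalZ (F i) t.
Proof. by rewrite /evalZ rmorph_sum horner_sum. Qed.

Lemma evalZ_1 (t : K) : evalZ 1 t = 1.
Proof. by rewrite /evalZ rmorph1 hornerC. Qed.

Lemma evalZ_0 (t : K) : evalZ 0 t = 0.
Proof. by rewrite /evalZ rmorph0 horner0. Qed.

Lemma evalZ_sign k (p : {poly int}) (t : K) : evalZ ((-1) ^+ k * p) t = (-1) ^+ k * evalZ p t.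
Proof. by rewrite -[in LHS]signr_odd -[in RHS]signr_odd !mulr_sign; case: (odd k); rewrite // /evalZ rmorphN hornerN. Qed.
End EvalZ.

Section Bfuel.
Variables (disp : Order.disp_t) (T : finTBPOrderType disp) (rho : T -> nat).
Variables (K : fieldType) (u v : K).

Lemma Bf_fuel n (x y : T) : (mL x y < n)%N -> Bf rho n u v x y = Bf rho n.+1 u v x y.
Proof.
elim: n x y => [//|n IH] x y h /=.
case: eqP => // _; congr (_ - _).
apply: eq_bigr => z /andP[xz zy]; rewrite IH //.
by have := mL_lt xz zy; lia.
Qed.

Lemma Bval_xx x : Bval rho u v x x = 1.
Proof. by rewrite /Bval cardT_S /= eqxx. Qed.

Lemma Bval_rec x y : x != y -> Bval rho u v x y = evalZ (Gpoly rho x y) (u * v)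
   - \sum_(z | (x <= z)%O && (z < y)%O)
       Bval rho u v x z * u ^+ (rk rho z y) * evalZ (Gpoly rho z y) (u^-1 * v).
Proof.
move=> nxy; rewrite /Bval cardT_S /= (negbTE nxy); congr (_ - _).
apply: eq_bigr => z /andP[xz zy]; congr (_ * _ * _); apply: Bf_fuel.
by rewrite -ltnS -cardT_S; have := mL_lt xz zy; have := mL_card x y; lia.
Qed.

Lemma B_conv : eqle (conv (Bval rho u v)
                       (fun z y => u ^+ (rk rho z y) * evalZ (Gpoly rho z y) (u^-1 * v)))
                    (fun x y => evalZ (Gpoly rho x y) (u * v)).
Proof.
move=> x y xy; rewrite conv_splitr //= /Defs.rk subnn expr0 mul1r Gpoly_xx evalZ_1 mulr1.
case: (eqVneq x y) => [<-|nxy].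
  rewrite Bval_xx Gpoly_xx evalZ_1 big1 ?addr0 // => z /andP[xz zx].
  by have := le_lt_trans xz zx; rewrite ltxx.
rewrite Bval_rec // [X in _ - X](eq_bigr (fun z => Bval rho u v x z *
     (u ^+ (rho y - rho z)%N * evalZ (Gpoly rho z y) (u^-1 * v)))); last by move=> z _; rewrite mulrA.
by rewrite subrK.
Qed.

End Bfuel.



Lemma conv_dual (disp : Order.disp_t) (T : finTBPOrderType disp) (R : comPzRingType)
  (f g : T -> T -> R) (x y : T) :
  conv (T := T^d) f g y x = conv (fun a b => g b a) (fun a b => f b a) x y.
Proof.
rewrite /conv; apply: eq_big => [z|z _]; last by rewrite mulrC.
by rewrite !leEdual andbC.
Qed.

Section Final.
Variables (disp : Order.disp_t) (T : finTBPOrderType disp) (rho : T -> nat) (d : nat).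
Hypothesis Hmono : forall x y : T, (x <= y)%O -> (rho x <= rho y)%N.
Hypothesis Hsmono : forall x y : T, (x < y)%O -> (rho x < rho y)%N.
Hypothesis Heuler : forall x y : T, (x < y)%O ->
  \sum_(z | (x <= z)%O && (z <= y)%O) (-1) ^+ (rho z - rho x)%N = 0 :> int.
Hypothesis Hd : forall x, (rho x <= d)%N.

Definition rhod : T^d -> nat := fun a => (d - rho a)%N.

Lemma rk_dual (a b : T) : rk rhod b a = rk rho a b.
Proof. rewrite /Defs.rk /rhod; have := Hd a; have := Hd b; lia. Qed.

Lemma Hmono_d : forall x y : T^d, (x <= y)%O -> (rhod x <= rhod y)%N.
Proof. move=> x y; rewrite leEdual /rhod => /Hmono; lia. Qed.

Lemma Hsmono_d : forall x y : T^d, (x < y)%O -> (rhod x < rhod y)%N.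
Proof. move=> x y; rewrite ltEdual /rhod => h; have := Hsmono h; have := Hd x; lia. Qed.

Lemma Heuler_d : forall x y : T^d, (x < y)%O ->
  \sum_(z | (x <= z)%O && (z <= y)%O) (-1) ^+ (rhod z - rhod x)%N = 0 :> int.
Proof.
move=> x y; rewrite ltEdual => yx.
have := Heuler yx => H.
transitivity ((-1) ^+ (rho x - rho y)%N *
   \sum_(z : T | ((y : T) <= z)%O && (z <= (x : T))%O) (-1) ^+ (rho z - rho y)%N : int); last first.
  by rewrite H mulr0.
rewrite mulr_sumr; apply: eq_big => [z|z /andP[yz zx]]; first by rewrite !leEdual andbC.
rewrite /rhod -exprD; have := Hd z; have := Hd x; have := Hmono yz; have := Hmono zx => h1 h2 h3 h4.
have -> : (d - rho z - (d - rho x) = rho x - rho z)%N by lia.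
have -> : (rho x - rho y + (rho z - rho y) = (rho x - rho z) + (rho z - rho y) * 2)%N by lia.
by rewrite exprD mulnC exprM sqrrN !expr1n mulr1.
Qed.

Definition Gs (x y : T) : {poly int} := Gpoly rhod y x.

Lemma Gs_S : eqle (conv (tw rho (-1) Gs) (Gpoly rho)) (@dl _ T _).
Proof.
apply: S_lemma => //.
- by move=> x; rewrite /Gs Gpoly_xx.
- move=> x y xy; rewrite /Gs -rk_dual; apply: Gpoly_size_lt.
  by rewrite eq_sym (lt_eqF xy).
- move=> x y xy; rewrite /Gs -rk_dual; apply: szb_G; by rewrite leEdual.
- move=> x y xy; rewrite /barf /Gs -rk_dual.
  have := KLS Hmono_d Hsmono_d Heuler_d (x := y) (y := x); rewrite leEdual => /(_ xy); rewrite /barf => <-.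
  rewrite conv_dual; apply: eq_bigr => z _; congr (_ * _).
  by rewrite /Kp rk_dual.
Qed.


Variables (K : fieldType) (u v : K).
Hypothesis Hu : u != 0.

Lemma S_eval (t : K) : eqle (conv (fun a b => (-1) ^+ (rk rho a b) * evalZ (Gs a b) t)
                                  (fun a b => evalZ (Gpoly rho a b) t)) (@dl _ T _).
Proof.
move=> x y xy; have := congr1 (fun p => evalZ p t) (Gs_S xy).
rewrite /= /conv evalZ_sum.
have -> : evalZ (@dl _ T {poly int} x y) t = @dl _ T K x y.
  by rewrite /dl; case: (x == y); rewrite /= ?evalZ_1 ?evalZ_0.
move=> <-; apply: eq_bigr => z _; rewrite evalZ_mul /tw evalZ_sign; by [].
Qed.

Lemma main_eq : eqle (Bval rho u v) (tw rho (-u) (fun x y => Bval rhod u^-1 v y x)).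
Proof.
set Bm := Bval rho u v.
set Bs := (fun x y => Bval rhod u^-1 v y x).
set Gh := (fun z y => u ^+ (rk rho z y) * evalZ (Gpoly rho z y) (u^-1 * v)).
set Gw := (fun x y => evalZ (Gpoly rho x y) (u * v)).
set Ghs := (fun x y => (u^-1) ^+ (rk rho x y) * evalZ (Gs x y) (u * v)).
set Gws := (fun x y => evalZ (Gs x y) (u^-1 * v)).
set P := tw rho (-u) Ghs.
have E1 : eqle (conv Bm Gh) Gw by exact: B_conv.
have E2 : eqle (conv Ghs Bs) Gws.
  move=> x y xy; have := @B_conv _ _ rhod K u^-1 v y x; rewrite leEdual => /(_ xy).
  rewrite conv_dual /Gws /Gs => <-; apply: eq_bigr => z _; congr (_ * _).
  by rewrite /Ghs rk_dual invrK.
have HP : forall x y, P x y = (-1) ^+ (rk rho x y) * evalZ (Gs x y) (u * v).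
  move=> x y; rewrite /P /tw /Ghs mulrA -exprMn mulNr mulfV //.
have F1 : eqle (conv P Gw) (@dl _ T _).
  move=> x y xy; rewrite -(S_eval (u * v) xy); apply: conv_eq => // a b ab.
have F2 : eqle (conv (tw rho (-u) Gws) Gh) (@dl _ T _).
  move=> x y xy.
  transitivity (u ^+ (rk rho x y) * @dl _ T K x y); last first.
    by rewrite /dl; case: eqP => [->|]; rewrite ?rkxx ?expr0 ?mul1r ?mulr0.
  rewrite -(S_eval (u^-1 * v) xy) /conv mulr_sumr; apply: eq_bigr => z /andP[xz zy].
  rewrite /tw /Gws /Gh (rk_add Hmono xz zy) (exprNn u) exprD; ring.
have F3 : eqle (conv P (tw rho (-u) Bs)) (tw rho (-u) Gws).
  move=> x y xy; rewrite /tw -(E2 x y xy) -/(tw rho (-u) (conv Ghs Bs) x y) tw_conv //.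
have G1 : eqle (conv (conv P Bm) Gh) (@dl _ T _).
  move=> x y xy; rewrite conv_assoc -(F1 x y xy); apply: conv_eq => // a b ab.
have G2 : eqle (conv (conv P (tw rho (-u) Bs)) Gh) (@dl _ T _).
  move=> x y xy; rewrite -(F2 x y xy); apply: conv_eq => // a b ab.
apply: (@conv_cancel_l _ _ _ P).
  by move=> x; rewrite HP rkxx expr0 mul1r /Gs Gpoly_xx evalZ_1.
apply: (@conv_cancel_r _ _ _ Gh).
  by move=> x; rewrite /Gh rkxx expr0 mul1r Gpoly_xx evalZ_1.
by move=> x y xy; rewrite G1 // G2.
Qed.

End Final.

End Aux.
Import Aux.
Unset Implicit Arguments.

Theorem theorem2p13 (disp : Order.disp_t) (T : finTBPOrderType disp)
    (rho : T -> nat) (d : nat) :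
  eulerian rho d ->
  forall (K : fieldType) (u v : K), u != 0 ->
  Bposet rho u v
  = (- u) ^+ d * Bposet (fun x : T^d => (d - rho x)%N) u^-1 v.
Proof.
move=> HE K u v Hu.
have := @main_eq _ T rho d (E_mono HE) (E_smono HE) (E_euler HE) (E_led HE) K u v Hu
  Order.bottom Order.top (le0x _).
rewrite /tw /Defs.rk (E_top HE) (E_bot HE) subn0 /Bposet => ->.
by [].
Qed.
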